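(* Let $a<b$ and let $X$ be a random variable taking values in $[a,b]$, with probability density function $f:[a,b]\rightarrow[0,1]$ and cumulative distribution function $F(x)=\Pr(X\le x)=\int_a^x f(t)\,dt$. Assume that $F$ is absolutely continuous with $F'=f\in L^2[a,b]$, and let $\sigma(f)=\|f\|_2^2-\frac{1}{b-a}$. Then for all $x\in[a,\frac{a+b}{2}]$, \[ \left|\frac{1}{2}[F(x)+F(a+b-x)]-\frac{b-E(X)}{b-a}\right|\leq (b-a)^{-1/2} \left[\frac{(b-a)^2}{48}+\left(x-\frac{3a+b}{4}\right)^2\right]^{1/2}\sqrt{\sigma(f)}, \] where $E(X)$ is the expectation of $X$.
   Context: $\|g\|_2=\left(\int_a^b g(t)^2\,dt\right)^{1/2}$. *)

(* Defs.v *)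
From HB Require Import structures.
From mathcomp Require Import all_boot all_order all_algebra.
From mathcomp Require Import all_classical all_reals all_analysis.
Set Implicit Arguments. Unset Strict Implicit. Unset Printing Implicit Defensive.
Import Order.TTheory GRing.Theory Num.Theory.
Import numFieldNormedType.Exports.
Local Open Scope classical_set_scope.
Local Open Scope ring_scope.

Definition dens_cdf {R : realType} (a : R) (f : R -> R) (x : R) : R :=
  Rintegral (@lebesgue_measure R) `[a, x] f.

Definition expect_dens {R : realType} (a b : R) (f : R -> R) : R :=
  Rintegral (@lebesgue_measure R) `[a, b] (fun t => t * f t).

Definition L2norm2 {R : realType} (a b : R) (f : R -> R) : R :=
  Rintegral (@lebesgue_measure R) `[a, b] (fun t => f t ^+ 2).

Definition sigma_f {R : realType} (a b : R) (f : R -> R) : R :=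
  L2norm2 a b f - (b - a)^-1.

(* Main.v *)
Require Import Defs.
From HB Require Import structures.
From mathcomp Require Import all_boot all_order all_algebra.
From mathcomp Require Import all_classical all_reals all_analysis.
Import Order.TTheory GRing.Theory Num.Theory.
Import numFieldNormedType.Exports.
Local Open Scope classical_set_scope.
Local Open Scope ring_scope.

From mathcomp Require Import ring lra.

Section S.
Local Set Implicit Arguments. Local Unset Strict Implicit.
Context {R : realType}.
Notation mu := (@lebesgue_measure R).

Lemma iD (p q : R) (g1 g2 : R -> R) : mu.-integrable `[p, q] (EFin \o g1) ->
  mu.-integrable `[p, q] (EFin \o g2) -> mu.-integrable `[p, q] (EFin \o (fun t => g1 t + g2 t)).
Proof. by move=> h1 h2; have := integrableD _ h1 h2; apply. Qed.
Lemma iB (p q : R) (g1 g2 : R -> R) : mu.-integrable `[p, q] (EFin \o g1) ->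
  mu.-integrable `[p, q] (EFin \o g2) -> mu.-integrable `[p, q] (EFin \o (fun t => g1 t - g2 t)).
Proof. by move=> h1 h2; have := integrableB _ h1 h2; apply. Qed.
Lemma iZ (p q : R) (g : R -> R) k : mu.-integrable `[p, q] (EFin \o g) ->
  mu.-integrable `[p, q] (EFin \o (fun t => k * g t)).
Proof. by move=> h; have := integrableZl _ k h; apply. Qed.

Lemma iMid (a b : R) (g : R -> R) : mu.-integrable `[a, b] (EFin \o g) ->
  mu.-integrable `[a, b] (EFin \o (fun t => t * g t)).
Proof.
move=> h; have := @integrableMr _ _ _ mu _ _ id _ _ _ h.
apply => //.
exact: (@compact_bounded R R^o _ (@segment_compact R a b)).
Qed.

Lemma split3 (p q r : R) (g : R -> R) : p <= q -> q <= r ->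
  mu.-integrable `[p, r] (EFin \o g) ->
  \int[mu]_(t in `[p, r]) g t = \int[mu]_(t in `[p, q]) g t + \int[mu]_(t in `[q, r]) g t.
Proof.
move=> pq qr h.
have := @Rintegral_itvB _ g (BLeft p) (BRight r) q h.
rewrite !bnd_simp => /(_ pq qr) => e.
rewrite Rintegral_itv_obnd_cbnd in e; last first.
  apply: integrableS h => //; apply: subset_itvr; rewrite bnd_simp //.
by rewrite -e addrC subrK.
Qed.

Lemma Rint_polyD (Q : {poly R}) (p q : R) : p <= q ->
  \int[mu]_(t in `[p, q]) (Q^`()).[t] = Q.[q] - Q.[p].
Proof.
rewrite le_eqVlt => /predU1P[<-|pq].
  by rewrite set_itv1 Rintegral_set1 subrr.
rewrite /Rintegral (@continuous_FTC2 _ _ (horner Q))//.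
- apply: continuous_in_subspaceT => x _; exact: continuous_horner.
- split.
  + by move=> x _; exact: derivable_horner.
  + apply: cvg_at_right_filter; exact: continuous_horner.
  + apply: cvg_at_left_filter; exact: continuous_horner.
- by move=> x _; rewrite -derivE.
Qed.

Lemma Rint_quad (A B p q : R) : p <= q ->
  \int[mu]_(t in `[p, q]) ((A + B * t) ^+ 2) =
  A^+2 * (q - p) + A * B * (q^+2 - p^+2) + B^+2 * (q^+3 - p^+3) / 3.
Proof.
move=> pq.
pose Q : {poly R} := (A^+2) *: 'X + (A * B) *: 'X^2 + (B^+2 / 3) *: 'X^3.
transitivity (\int[mu]_(t in `[p, q]) (Q^`()).[t]).
  apply: eq_Rintegral => t _; rewrite /Q !derivD !derivZ derivX !derivXn !hornerE /=.
  by field.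
rewrite (Rint_polyD Q pq).
rewrite /Q !(hornerD, hornerZ, hornerXn, hornerX); by field.
Qed.

Lemma iquad (A B p q : R) :
  mu.-integrable `[p, q] (EFin \o (fun t => (A + B * t) ^+ 2)).
Proof.
have -> : (fun t => (A + B * t) ^+ 2) = horner ((A%:P + B *: 'X)^+2).
  by apply/funext => t; rewrite horner_exp hornerD hornerC hornerZ hornerX.
apply: continuous_compact_integrable; first exact: segment_compact.
apply: continuous_in_subspaceT => x _; exact: continuous_horner.
Qed.

Lemma piece (a b : R) (f : R -> R) (p q A B : R) :
  mu.-integrable `[a, b] (EFin \o f) ->
  mu.-integrable `[a, b] (EFin \o (fun t => f t ^+ 2)) ->
  a <= p -> p <= q -> q <= b ->
  0 <= \int[mu]_(t in `[p, q]) (f t ^+ 2) - 2 * A * \int[mu]_(t in `[p, q]) f t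
       - 2 * B * \int[mu]_(t in `[p, q]) (t * f t)
       + (A^+2 * (q - p) + A * B * (q^+2 - p^+2) + B^+2 * (q^+3 - p^+3) / 3).
Proof.
move=> hf1 hf2 ap pq qb.
have sub : `[p, q] `<=` `[a, b].
  by apply: subset_itv; rewrite bnd_simp.
have i1 : mu.-integrable `[p, q] (EFin \o f) by apply: integrableS hf1.
have i2 : mu.-integrable `[p, q] (EFin \o (fun t => f t ^+ 2)) by apply: integrableS hf2.
have i3 : mu.-integrable `[p, q] (EFin \o (fun t => t * f t)).
  by apply: integrableS (iMid hf1).
have i4 := iquad A B p q.
have i5 : mu.-integrable `[p, q] (EFin \o (fun t => 2 * A * f t + 2 * B * (t * f t))).
  by apply: iD; apply: iZ.
have i6 : mu.-integrable `[p, q] (EFin \o (fun t => f t ^+ 2 - (2 * A * f t + 2 * B * (t * f t)))).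
  by apply: iB.
have H0 : 0 <= \int[mu]_(t in `[p, q]) ((f t - (A + B * t)) ^+ 2).
  by apply: Rintegral_ge0 => t _; exact: sqr_ge0.
have E : \int[mu]_(t in `[p, q]) ((f t - (A + B * t)) ^+ 2) =
  \int[mu]_(t in `[p, q]) (f t ^+ 2 - (2 * A * f t + 2 * B * (t * f t)))
  + \int[mu]_(t in `[p, q]) ((A + B * t) ^+ 2).
  rewrite -RintegralD //; apply: eq_Rintegral => t _; ring.
have i7 : mu.-integrable `[p, q] (EFin \o (fun t => 2 * A * f t)) by apply: iZ.
have i8 : mu.-integrable `[p, q] (EFin \o (fun t => 2 * B * (t * f t))) by apply: iZ.
rewrite E RintegralB // RintegralD // in H0.
rewrite (@RintegralZl _ _ _ mu `[p, q] f (2 * A)) // in H0.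
rewrite (@RintegralZl _ _ _ mu `[p, q] (fun t => t * f t) (2 * B)) // in H0.
rewrite (Rint_quad A B pq) in H0.
by move: H0; lra.
Qed.
End S.

Theorem theorem4p3 (R : realType) (a b : R) (f : R -> R) :
  a < b ->
  measurable_fun `[a, b] f ->
  (forall t, a <= t <= b -> 0 <= f t <= 1) ->
  (@lebesgue_measure R).-integrable `[a, b] (EFin \o f) ->
  Rintegral (@lebesgue_measure R) `[a, b] f = 1 ->
  (@lebesgue_measure R).-integrable `[a, b] (fun t => (f t ^+ 2)%:E) ->
  forall x, a <= x <= (a + b) / 2 ->
    `| (dens_cdf a f x + dens_cdf a f (a + b - x)) / 2 - (b - expect_dens a b f) / (b - a) |
    <= (Num.sqrt (b - a))^-1
       * Num.sqrt ((b - a) ^+ 2 / 48 + (x - (3 * a + b) / 4) ^+ 2)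
       * Num.sqrt (sigma_f a b f).
Proof.
Proof.
move=> ab mf f01 hf1 int1 hf2 x /andP[ax xm].
set L := b - a.
have L0 : 0 < L by rewrite subr_gt0.
set y := a + b - x.
have xy : x <= y by rewrite /y; move: xm; rewrite ler_pdivlMr //; lra.
have yb : y <= b by rewrite /y; lra.
have ay : a <= y by lra.
have xb : x <= b by lra.
have hf2' : (@lebesgue_measure R).-integrable `[a, b] (EFin \o (fun t => f t ^+ 2)) by [].
have hf3 := iMid hf1.
have spl : forall g : R -> R, (@lebesgue_measure R).-integrable `[a, b] (EFin \o g) ->
    \int[@lebesgue_measure R]_(t in `[a, b]) g t = \int[@lebesgue_measure R]_(t in `[a, x]) g t
      + (\int[@lebesgue_measure R]_(t in `[x, y]) g t + \int[@lebesgue_measure R]_(t in `[y, b]) g t).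
  move=> g hg; rewrite (split3 ax xb hg) (split3 xy yb) //.
  by apply: integrableS hg => //; apply: subset_itv; rewrite bnd_simp.
have sF := spl _ hf1.
have sT := spl _ hf3.
have sQ := spl _ hf2'.
have Fy : dens_cdf a f y = \int[@lebesgue_measure R]_(t in `[a, x]) f t + \int[@lebesgue_measure R]_(t in `[x, y]) f t.
  rewrite /dens_cdf (split3 ax xy) //.
  by apply: integrableS hf1 => //; apply: subset_itv; rewrite bnd_simp.
rewrite -/y Fy /expect_dens sT /sigma_f /L2norm2 sQ.
rewrite int1 in sF.
move: sF.
set X1 := \int[@lebesgue_measure R]_(t in `[a, x]) f t.
set X2 := \int[@lebesgue_measure R]_(t in `[x, y]) f t.
set X3 := \int[@lebesgue_measure R]_(t in `[y, b]) f t.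
set T1 := \int[@lebesgue_measure R]_(t in `[a, x]) (t * f t).
set T2 := \int[@lebesgue_measure R]_(t in `[x, y]) (t * f t).
set T3 := \int[@lebesgue_measure R]_(t in `[y, b]) (t * f t).
set Q1 := \int[@lebesgue_measure R]_(t in `[a, x]) (f t ^+ 2).
set Q2 := \int[@lebesgue_measure R]_(t in `[x, y]) (f t ^+ 2).
set Q3 := \int[@lebesgue_measure R]_(t in `[y, b]) (f t ^+ 2).
move=> sF.
have -> : dens_cdf a f x = X1 by [].
set I := (X1 + (X1 + X2)) / 2 - (b - (T1 + (T2 + T3))) / L.
set S := Q1 + (Q2 + Q3) - L^-1.
set Qk := L ^+ 2 / 48 + (x - (3 * a + b) / 4) ^+ 2.
have key : forall l, 0 <= S - 2 * l * I + l ^+ 2 * (Qk / L).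
  move=> l.
  have P1 := piece (1 / L - l * a / L) (l / L) hf1 hf2' (lexx a) ax xb.
  have P2 := piece (1 / L - l * ((a + b) / 2) / L) (l / L) hf1 hf2' ax xy yb.
  have P3 := piece (1 / L - l * b / L) (l / L) hf1 hf2' ay yb (lexx b).
  rewrite -/X1 -/X2 -/X3 -/T1 -/T2 -/T3 -/Q1 -/Q2 -/Q3 in P1 P2 P3.
  have -> : S - 2 * l * I + l ^+ 2 * (Qk / L) =
    (Q1 - 2 * (1 / L - l * a / L) * X1 - 2 * (l / L) * T1 +
     ((1 / L - l * a / L) ^+ 2 * (x - a) + (1 / L - l * a / L) * (l / L) * (x ^+ 2 - a ^+ 2) +
      (l / L) ^+ 2 * (x ^+ 3 - a ^+ 3) / 3))
    + (Q2 - 2 * (1 / L - l * ((a + b) / 2) / L) * X2 - 2 * (l / L) * T2 +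
     ((1 / L - l * ((a + b) / 2) / L) ^+ 2 * (y - x) + (1 / L - l * ((a + b) / 2) / L) * (l / L) * (y ^+ 2 - x ^+ 2) +
      (l / L) ^+ 2 * (y ^+ 3 - x ^+ 3) / 3))
    + (Q3 - 2 * (1 / L - l * b / L) * X3 - 2 * (l / L) * T3 +
     ((1 / L - l * b / L) ^+ 2 * (b - y) + (1 / L - l * b / L) * (l / L) * (b ^+ 2 - y ^+ 2) +
      (l / L) ^+ 2 * (b ^+ 3 - y ^+ 3) / 3)).
    have -> : X3 = 1 - X1 - X2 by move: sF; lra.
    rewrite /S /I /Qk /y /L; field.
    by rewrite subr_eq0 gt_eqF.
  by apply: addr_ge0; [apply: addr_ge0|]; assumption.
have Qk0 : 0 < Qk.
  rewrite /Qk; apply: ltr_wpDr; first exact: sqr_ge0.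
  by apply: divr_gt0 => //; exact: exprn_gt0.
have K0 : 0 < Qk / L by apply: divr_gt0.
have S0 : 0 <= S by have := key 0; rewrite !(mul0r, mulr0, expr0n) /= subr0 addr0.
have HI : I ^+ 2 <= S * (Qk / L).
  have := key (I / (Qk / L)).
  have -> : S - 2 * (I / (Qk / L)) * I + (I / (Qk / L)) ^+ 2 * (Qk / L)
     = (S * (Qk / L) - I ^+ 2) / (Qk / L).
    by field; rewrite (gt_eqF Qk0) (gt_eqF L0).
  move=> h; rewrite -subr_ge0; have := mulr_ge0 h (ltW K0).
  by rewrite divfK ?gt_eqF.
have L0' := ltW L0.
have Qk0' := ltW Qk0.
have -> : (Num.sqrt L)^-1 * Num.sqrt Qk * Num.sqrt S = Num.sqrt (L^-1 * Qk * S).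
  rewrite sqrtrM; last by apply: mulr_ge0 => //; rewrite invr_ge0.
  rewrite sqrtrM; last by rewrite invr_ge0.
  by rewrite sqrtrV.
rewrite -sqrtr_sqr; apply: ler_wsqrtr; move: HI.
have -> : L^-1 * Qk * S = S * (Qk / L) by rewrite mulrC (mulrC L^-1).
by [].
Qed.
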